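(* A well-founded reduced order $(S,<_S)$ is tame if and only if it embeds into $(R_\lambda,<_{R_\lambda})$ for some ordinal $\lambda$. Moreover, in that case the minimal ordinal $\lambda$ such that $(S,<_S)$ embeds into $R_\lambda$ is $\lambda=\mathrm{tamerank}(S,<_S)$, and $\mathrm{tamerank}(S,<_S)<|S|^+$.
   Context: An order $(S,<_S)$ is a set with a strict partial order (antisymmetric, transitive). An embedding of $(S,<_S)$ into $(R,<_R)$ is an injection $\pi$ with $x<_S y\iff \pi(x)<_R\pi(y)$. For an ordinal $\lambda$, $R_\lambda=\{(\alpha,\beta)\in\lambda^2\mid \alpha\leq\beta\}$ with $(\alpha,\beta)<_{R_\lambda}(\alpha',\beta')\iff \beta<\alpha'$. $R_{2,2}$ is the order on $\{x_0,x_1,y_0,y_1\}$ whose only relations are $x_0<y_0$, $x_1<y_1$. $S_{\omega,2}$ is the order on $\{x_n\}_{n<\omega}\uplus\{y_n\}_{n<\omega}$ whose relations are exactly $x_m<y_n$ for $m\geq n$. An order is tame if it embeds neither $R_{2,2}$ nor $S_{\omega,2}$. For $x\in S$: $d(x)=\{z\mid z<_S x\}$, $u(x)=\{z\mid x<_S z\}$, $\mathrm{cu}(x)=S\setminus u(x)$, $\mathrm{CU}(S)=\{\mathrm{cu}(x)\mid x\in S\}$. $S$ is reduced if there are no distinct $x,y\in S$ with $(d(x),u(x))=(d(y),u(y))$. For a tame well-founded order, $(\mathrm{CU}(S),\subsetneq)$ is a well-order and $\mathrm{tamerank}(S,<_S)$ is its order type. *)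

(* Defs.v *)
From Stdlib Require Import Arith.

Definition strict_order {S : Type} (lt : S -> S -> Prop) : Prop :=
  (forall x, ~ lt x x) /\ (forall x y z, lt x y -> lt y z -> lt x z).

Definition embedding {S T : Type} (ltS : S -> S -> Prop) (ltT : T -> T -> Prop)
  (f : S -> T) : Prop :=
  (forall x y, f x = f y -> x = y) /\ (forall x y, ltS x y <-> ltT (f x) (f y)).

Definition embeds {S T : Type} (ltS : S -> S -> Prop) (ltT : T -> T -> Prop) : Prop :=
  exists f : S -> T, embedding ltS ltT f.

(* Ordinals are represented by (strict) well-ordered types. *)
Definition well_order {W : Type} (r : W -> W -> Prop) : Prop :=
  (forall a, ~ r a a) /\ (forall a b c, r a b -> r b c -> r a c) /\
  (forall a b, r a b \/ a = b \/ r b a) /\ well_founded r.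

(* Ordinal comparison: (A,rA) <= (B,rB) iff (A,rA) is isomorphic to an
   initial segment of (B,rB). *)
Definition ord_le {A B : Type} (rA : A -> A -> Prop) (rB : B -> B -> Prop) : Prop :=
  exists f : A -> B,
    (forall a a', rA a a' <-> rB (f a) (f a')) /\
    (forall a b, rB b (f a) -> exists a', f a' = b).

Definition Rl_carrier {W : Type} (ltW : W -> W -> Prop) : Type :=
  { p : W * W | ~ ltW (snd p) (fst p) }.

Definition Rl_lt {W : Type} (ltW : W -> W -> Prop)
  (p q : Rl_carrier ltW) : Prop :=
  ltW (snd (proj1_sig p)) (fst (proj1_sig q)).

(* R_{2,2}: x_i = (false, i), y_i = (true, i); only x_i < y_i. *)
Definition R22_lt (p q : bool * bool) : Prop :=
  fst p = false /\ fst q = true /\ snd p = snd q.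

(* S_{omega,2}: x_n = (false, n), y_n = (true, n); x_m < y_n iff m >= n. *)
Definition Somega2_lt (p q : bool * nat) : Prop :=
  fst p = false /\ fst q = true /\ snd q <= snd p.

Definition tame {S : Type} (lt : S -> S -> Prop) : Prop :=
  ~ embeds R22_lt lt /\ ~ embeds Somega2_lt lt.

Definition reduced {S : Type} (lt : S -> S -> Prop) : Prop :=
  forall x y, (forall z, lt z x <-> lt z y) -> (forall z, lt x z <-> lt y z) -> x = y.

Definition cu {S : Type} (lt : S -> S -> Prop) (x : S) : S -> Prop :=
  fun z => ~ lt x z.

Definition CU {S : Type} (lt : S -> S -> Prop) : Type :=
  { A : S -> Prop | exists x, A = cu lt x }.

Definition CU_lt {S : Type} (lt : S -> S -> Prop) (A B : CU lt) : Prop :=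
  (forall z, proj1_sig A z -> proj1_sig B z) /\
  ~ (forall z, proj1_sig B z -> proj1_sig A z).

(* Main.v *)
Require Import Defs.
From Stdlib Require Import Arith Lia Setoid Classical ClassicalEpsilon FunctionalExtensionality PropExtensionality.

Lemma wf_min {T} (r : T -> T -> Prop) : well_founded r -> forall P : T -> Prop,
  (exists x, P x) -> exists m, P m /\ forall y, P y -> ~ r y m.
Proof.
  intros wf P [x Px]. apply NNPP; intro Hn.
  assert (H : forall y, Acc r y -> ~ P y).
  { intros y Hy. induction Hy as [y _ IH]. intro Py. apply Hn. exists y. split; [exact Py|].
    intros z Pz rzy. exact (IH z rzy Pz). }
  exact (H x (wf x) Px).
Qed.

Lemma wo_le_lt {T} (r : T -> T -> Prop) : well_order r -> forall x y z, ~ r y x -> r y z -> r x z.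
Proof.
  intros [irr [tr [tri _]]] x y z H1 H2.
  destruct (tri x y) as [h|[h|h]]. - eapply tr; eauto. - subst; auto. - contradiction.
Qed.

Lemma wo_lt_le {T} (r : T -> T -> Prop) : well_order r -> forall a b c, r a b -> ~ r c b -> r a c.
Proof.
  intros [irr [tr [tri _]]] a b c H1 H2.
  destruct (tri b c) as [h|[h|h]]. - eapply tr; eauto. - subst; auto. - contradiction.
Qed.

Lemma wo_least {T} (r : T -> T -> Prop) (P : T -> Prop) : well_order r -> (exists x, P x) ->
  { m | P m /\ forall y, P y -> ~ r y m }.
Proof.
  intros Hw Hex. apply constructive_indefinite_description.
  destruct Hw as [_ [_ [_ wf]]]. exact (wf_min r wf P Hex).
Qed.

Definition cmpF {A B} (rA : A -> A -> Prop) (rB : B -> B -> Prop) (wB : well_order rB) (h : A -> B)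
  (a : A) (rec : forall a', rA a' a -> B) : B :=
  match excluded_middle_informative (exists b, forall a' (H : rA a' a), rB (rec a' H) b) with
  | left ex => proj1_sig (wo_least rB (fun b => forall a' (H : rA a' a), rB (rec a' H) b) wB ex)
  | right _ => h a
  end.

Lemma cmpF_spec {A B} rA rB wB h a rec (ex : exists b, forall a' (H : rA a' a), rB (rec a' H) b) :
  (forall a' (H : rA a' a), rB (rec a' H) (@cmpF A B rA rB wB h a rec)) /\
  (forall b, (forall a' (H : rA a' a), rB (rec a' H) b) -> ~ rB b (cmpF rA rB wB h a rec)).
Proof.
  unfold cmpF. destruct (excluded_middle_informative _) as [e|n]; [|contradiction].
  destruct (wo_least _ _ _ _) as [m [Hm1 Hm2]]. simpl. split; auto.
Qed.

Lemma wo_embed_ord_le {A B} (rA : A -> A -> Prop) (rB : B -> B -> Prop) :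
  well_order rA -> well_order rB -> forall h : A -> B, (forall a a', rA a a' -> rB (h a) (h a')) ->
  ord_le rA rB.
Proof.
  intros wA wB h hm.
  pose proof wA as [irA [trA [triA wfA]]].
  pose proof wB as [irB [trB [triB wfB]]].
  pose (f := Fix wfA (fun _ => B) (cmpF rA rB wB h)).
  assert (Heq : forall a, f a = cmpF rA rB wB h a (fun y _ => f y)).
  { intro a. unfold f. refine (Fix_eq wfA (fun _ => B) (cmpF rA rB wB h) _ a). intros x g1 g2 Hg.
    assert (g1 = g2) by (apply functional_extensionality_dep; intro y;
      apply functional_extensionality_dep; intro p; apply Hg).
    subst; reflexivity. }
  assert (Hspec : forall a, ~ rB (h a) (f a) /\
     (forall a', rA a' a -> rB (f a') (f a)) /\
     (forall b, (forall a', rA a' a -> rB (f a') b) -> ~ rB b (f a))).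
  { intro a. induction (wfA a) as [a _ IH].
    assert (ex : exists b, forall a' (H : rA a' a), rB ((fun y (_ : rA y a) => f y) a' H) b).
    { exists (h a). intros a' H. simpl. apply (wo_le_lt rB wB _ (h a')).
      apply (proj1 (IH a' H)). apply hm; exact H. }
    destruct (cmpF_spec rA rB wB h a _ ex) as [S1 S2].
    rewrite (Heq a). split; [|split].
    - apply S2. intros a' H. simpl. apply (wo_le_lt rB wB _ (h a')). apply (proj1 (IH a' H)). apply hm; exact H.
    - intros a' H. exact (S1 a' H).
    - intros b Hb. apply S2. intros a' H; exact (Hb a' H). }
  exists f. split.
  - intros a a'. split.
    + intro H. apply (proj1 (proj2 (Hspec a'))). exact H.
    + intro H. destruct (triA a a') as [h1|[h1|h1]]; [exact h1| subst; exfalso; exact (irB _ H) |].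
      exfalso. apply (irB (f a)). apply trB with (f a'); [exact H| apply (proj1 (proj2 (Hspec a))); exact h1].
  - intro a. induction (wfA a) as [a _ IH]. intros b Hb.
    destruct (classic (forall a', rA a' a -> rB (f a') b)) as [Hall|Hn].
    + exfalso. exact (proj2 (proj2 (Hspec a)) b Hall Hb).
    + apply not_all_ex_not in Hn. destruct Hn as [a' Ha']. apply imply_to_and in Ha'.
      destruct Ha' as [Ha' Hnb].
      destruct (triB b (f a')) as [h1|[h1|h1]].
      * exact (IH a' Ha' b h1).
      * exists a'. auto.
      * contradiction.
Qed.

Lemma emb_compose {A B C} (rA : A->A->Prop) (rB : B->B->Prop) (rC : C->C->Prop) :
  embeds rA rB -> embeds rB rC -> embeds rA rC.
Proof.
  intros [f [fi fo]] [g [gi go]]. exists (fun x => g (f x)). split.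
  - intros x y H. apply fi, gi, H.
  - intros x y. rewrite fo. apply go.
Qed.

Lemma emb_of_iff {A T} (rA : A->A->Prop) (rT : T->T->Prop) (F : A -> T) :
  (forall p q, rA p q <-> rT (F p) (F q)) ->
  (forall p q, (forall r, rA p r <-> rA q r) -> (forall r, rA r p <-> rA r q) -> p = q) ->
  embedding rA rT F.
Proof.
  intros H Hd. split; [|exact H].
  intros p q E. apply Hd; intro r; rewrite !H, E; tauto.
Qed.

Lemma R22_red : forall p q : bool*bool, (forall r, R22_lt p r <-> R22_lt q r) ->
  (forall r, R22_lt r p <-> R22_lt r q) -> p = q.
Proof.
  intros [[|] [|]] [[|] [|]] H1 H2; try reflexivity; exfalso;
  pose proof (H1 (true,true)); pose proof (H1 (true,false));
  pose proof (H2 (false,true)); pose proof (H2 (false,false));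
  clear H1 H2; unfold R22_lt in *; simpl in *; intuition discriminate.
Qed.

Lemma Som_red : forall p q : bool*nat, (forall r, Somega2_lt p r <-> Somega2_lt q r) ->
  (forall r, Somega2_lt r p <-> Somega2_lt r q) -> p = q.
Proof.
  intros [[|] m] [[|] n] H1 H2.
  - destruct (H2 (false,m)) as [a _]. destruct (H2 (false,n)) as [_ b].
    unfold Somega2_lt in *; simpl in *.
    assert (n <= m) by (apply a; auto). assert (m <= n) by (apply b; auto). f_equal; lia.
  - exfalso. destruct (H2 (false, m)) as [a _]. unfold Somega2_lt in *; simpl in *.
    destruct (a (conj eq_refl (conj eq_refl (le_n m)))) as [_ [c _]]. discriminate.
  - exfalso. destruct (H2 (false, n)) as [_ a]. unfold Somega2_lt in *; simpl in *.
    destruct (a (conj eq_refl (conj eq_refl (le_n n)))) as [_ [c _]]. discriminate.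
  - destruct (H1 (true,m)) as [a _]. destruct (H1 (true,n)) as [_ b].
    unfold Somega2_lt in *; simpl in *.
    assert (m <= n) by (apply a; auto). assert (n <= m) by (apply b; auto). f_equal; lia.
Qed.

Lemma no_desc {T} (r : T->T->Prop) : well_founded r -> forall f : nat -> T,
  (forall n, r (f (S n)) (f n)) -> False.
Proof.
  intros wf f Hf.
  assert (H : forall x, Acc r x -> forall n, f n <> x).
  { intros x Hx. induction Hx as [x _ IH]. intros n E. refine (IH (f (S n)) _ (S n) eq_refl).
    rewrite <- E. apply Hf. }
  exact (H (f 0) (wf (f 0)) 0 eq_refl).
Qed.

Lemma Rl_noR22 {W} (ltW : W->W->Prop) : well_order ltW -> ~ embeds R22_lt (Rl_lt ltW).
Proof.
  intros wo [e [_ He]].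
  assert (a1 := proj1 (He (false,false) (true,false)) (conj eq_refl (conj eq_refl eq_refl))).
  assert (a2 := proj1 (He (false,true) (true,true)) (conj eq_refl (conj eq_refl eq_refl))).
  assert (a3 : ~ Rl_lt ltW (e (false,false)) (e (true,true))).
  { intro H. apply He in H. destruct H as [_ [_ H]]. discriminate. }
  assert (a4 : ~ Rl_lt ltW (e (false,true)) (e (true,false))).
  { intro H. apply He in H. destruct H as [_ [_ H]]. discriminate. }
  unfold Rl_lt in *.
  pose proof (wo_lt_le ltW wo _ _ _ a1 a4). pose proof (wo_lt_le ltW wo _ _ _ a2 a3).
  destruct wo as [ir [tr _]]. eapply ir, tr; eauto.
Qed.

Lemma Rl_noSom {W} (ltW : W->W->Prop) : well_order ltW -> ~ embeds Somega2_lt (Rl_lt ltW).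
Proof.
  intros wo [e [_ He]].
  apply (no_desc ltW (proj2 (proj2 (proj2 wo))) (fun n => snd (proj1_sig (e (false,n))))).
  intro n. simpl.
  assert (a1 := proj1 (He (false, S n) (true, S n)) (conj eq_refl (conj eq_refl (le_n _)))).
  assert (a2 : ~ Rl_lt ltW (e (false,n)) (e (true, S n))).
  { intro H. apply He in H. destruct H as [_ [_ H]]. simpl in H. lia. }
  unfold Rl_lt in *. exact (wo_lt_le ltW wo _ _ _ a1 a2).
Qed.

Lemma Rl_tame {X} (lt : X->X->Prop) {W} (ltW : W->W->Prop) :
  well_order ltW -> embeds lt (Rl_lt ltW) -> tame lt.
Proof.
  intros wo He. split; intro H.
  - apply (Rl_noR22 ltW wo). exact (emb_compose _ _ _ H He).
  - apply (Rl_noSom ltW wo). exact (emb_compose _ _ _ H He).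
Qed.

Definition usub {X} (lt : X->X->Prop) x y := forall z, lt x z -> lt y z.

Lemma u_linear {X} (lt : X->X->Prop) : strict_order lt -> tame lt ->
  forall x y, usub lt x y \/ usub lt y x.
Proof.
  intros [irr tr] [nR _] a b. apply NNPP; intro Hn. apply not_or_and in Hn. destruct Hn as [Hab Hba].
  unfold usub in *. apply not_all_ex_not in Hab. destruct Hab as [c Hc].
  apply imply_to_and in Hc. destruct Hc as [H1 H2].
  apply not_all_ex_not in Hba. destruct Hba as [d Hd]. apply imply_to_and in Hd. destruct Hd as [H3 H4].
  assert (Nab : ~ lt a b) by (intro H; apply H4; eapply tr; eauto).
  assert (Nba : ~ lt b a) by (intro H; apply H2; eapply tr; eauto).
  assert (Ncd : ~ lt c d) by (intro H; apply H4; eapply tr; eauto).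
  assert (Ndc : ~ lt d c) by (intro H; apply H2; eapply tr; eauto).
  assert (Nca : ~ lt c a) by (intro H; apply (irr a); eapply tr; eauto).
  assert (Ndb : ~ lt d b) by (intro H; apply (irr b); eapply tr; eauto).
  assert (Ncb : ~ lt c b) by (intro H; apply H4; eapply tr; [exact H1|]; eapply tr; eauto).
  assert (Nda : ~ lt d a) by (intro H; apply H2; eapply tr; [exact H3|]; eapply tr; eauto).
  apply nR. exists (fun p : bool*bool => match p with (false,false) => a | (true,false) => c
     | (false,true) => b | (true,true) => d end).
  apply emb_of_iff; [| exact R22_red].
  intros [[|] [|]] [[|] [|]]; unfold R22_lt; simpl; split; intro H;
  first [ contradiction | exfalso; apply (irr _ H) | (destruct H as [? [? ?]]; discriminate)
        | assumption | (repeat split; reflexivity) ].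
Qed.

Definition uchain {X} (lt : X->X->Prop) (c : nat -> X) :=
  (forall n, usub lt (c n) (c (S n))) /\ (forall n, exists z, lt (c (S n)) z /\ ~ lt (c n) z).

Lemma uchain_le {X} (lt : X->X->Prop) c : uchain lt c -> forall i j, i <= j -> usub lt (c i) (c j).
Proof. intros [H1 _] i j Hij. induction Hij. - intros z h; exact h. - intros z h. apply H1, IHHij, h. Qed.

Lemma uchain_lt {X} (lt : X->X->Prop) c : uchain lt c -> forall i j, i < j ->
  exists z, lt (c j) z /\ ~ lt (c i) z.
Proof.
  intros Hc i j Hij. destruct j as [|j]; [lia|].
  destruct (proj2 Hc j) as [z [Hz1 Hz2]]. exists z. split; auto.
  intro H. apply Hz2. apply (uchain_le lt c Hc i j); [lia| exact H].
Qed.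

Lemma uchain_anti {X} (lt : X->X->Prop) c : strict_order lt -> uchain lt c ->
  forall i j, lt (c i) (c j) -> j < i.
Proof.
  intros [irr tr] Hc i j H. destruct (lt_eq_lt_dec i j) as [[h|h]|h]; auto.
  - exfalso. destruct (uchain_lt lt c Hc i j h) as [z [z1 z2]]. apply z2. eapply tr; eauto.
  - subst. exfalso. exact (irr _ H).
Qed.

Lemma uchain_sub {X} (lt : X->X->Prop) c f : uchain lt c -> (forall i j, i < j -> f i < f j) ->
  uchain lt (fun n => c (f n)).
Proof.
  intros Hc Hf. split; intro n.
  - apply (uchain_le lt c Hc). apply Nat.lt_le_incl, Hf. lia.
  - apply (uchain_lt lt c Hc). apply Hf; lia.
Qed.

Fixpoint itseq (g : nat -> nat) (n : nat) : nat :=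
  match n with 0 => g 0 | S n => g (S (itseq g n)) end.

Lemma antichain_sub {X} (lt : X->X->Prop) : strict_order lt -> well_founded lt -> forall s : nat -> X,
  (forall i j, lt (s i) (s j) -> j < i) ->
  exists f : nat -> nat, (forall i j, i < j -> f i < f j) /\
    (forall i j, i <> j -> ~ lt (s (f i)) (s (f j))).
Proof.
  intros [irr tr] wf s Hs.
  assert (Hg : forall N, {j | N <= j /\ forall k, N <= k -> ~ lt (s k) (s j)}).
  { intro N. apply constructive_indefinite_description.
    destruct (wf_min lt wf (fun x => exists k, N <= k /\ s k = x)) as [m [[j [Hj Ej]] Hm]].
    - exists (s N), N. auto.
    - exists j. split; auto. intros k Hk. subst m. apply Hm. exists k; auto. }
  pose (g := fun N => proj1_sig (Hg N)).
  assert (Hg1 : forall N, N <= g N) by (intro N; exact (proj1 (proj2_sig (Hg N)))).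
  assert (Hg2 : forall N k, N <= k -> ~ lt (s k) (s (g N))) by (intro N; exact (proj2 (proj2_sig (Hg N)))).
  pose (L := fun n => match n with 0 => 0 | S n => S (itseq g n) end).
  assert (HL1 : forall n, L n <= itseq g n) by (intros [|n]; simpl; apply Hg1).
  assert (HL2 : forall n k, L n <= k -> ~ lt (s k) (s (itseq g n))) by (intros [|n]; simpl; apply Hg2).
  assert (inc : forall n, itseq g n < itseq g (S n)).
  { intro n. simpl. pose proof (Hg1 (S (itseq g n))). lia. }
  assert (mono : forall i j, i < j -> itseq g i < itseq g j).
  { intros i j H. induction H. - apply inc. - pose proof (inc m). lia. }
  exists (itseq g). split; [exact mono|].
  intros i j Hij. destruct (lt_eq_lt_dec i j) as [[h|h]|h]; [| contradiction |].
  - intro H. apply Hs in H. pose proof (mono _ _ h). lia.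
  - apply HL2. pose proof (mono _ _ h). pose proof (HL1 j). lia.
Qed.

Lemma uchain_Som {X} (lt : X->X->Prop) : strict_order lt -> well_founded lt ->
  forall c, uchain lt c -> embeds Somega2_lt lt.
Proof.
  intros so wf c Hc. pose proof so as [irr tr].
  destruct (antichain_sub lt so wf c (uchain_anti lt c so Hc)) as [f1 [f1m f1a]].
  pose (z := fun n => c (f1 n)).
  assert (Hz : uchain lt z) by exact (uchain_sub lt c f1 Hc f1m).
  assert (za : forall i j, i <> j -> ~ lt (z i) (z j)) by exact f1a.
  assert (Hy : forall n, {y | lt (z (S n)) y /\ ~ lt (z n) y}).
  { intro n. apply constructive_indefinite_description. apply (proj2 Hz). }
  pose (y := fun n => proj1_sig (Hy n)).
  assert (y1 : forall n, lt (z (S n)) (y n)) by (intro n; exact (proj1 (proj2_sig (Hy n)))).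
  assert (y2 : forall n, ~ lt (z n) (y n)) by (intro n; exact (proj2 (proj2_sig (Hy n)))).
  clearbody y z.
  assert (yanti : forall i j, lt (y i) (y j) -> j < i).
  { intros i j H. destruct (lt_eq_lt_dec i j) as [[h|h]|h]; auto; exfalso.
    - apply (y2 j). apply (uchain_le lt z Hz (S i) j h). eapply tr; [apply y1| exact H].
    - subst. exact (irr _ H). }
  destruct (antichain_sub lt so wf y yanti) as [g [gm ga]].
  assert (gle : forall i j, i <= j -> g i <= g j).
  { intros i j H. destruct (Nat.eq_dec i j); [subst; lia| apply Nat.lt_le_incl, gm; lia]. }
  assert (ginj : forall i j, g i = g j -> i = j).
  { intros i j H. destruct (lt_eq_lt_dec i j) as [[h|h]|h]; auto; apply gm in h; lia. }
  pose (XX := fun m => z (S (g m))). pose (YY := fun n => y (g n)).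
  assert (XY : forall m n, lt (XX m) (YY n) <-> n <= m).
  { intros m n. unfold XX, YY. split; intro H.
    - destruct (le_lt_dec n m) as [h|h]; auto. exfalso. apply (y2 (g n)).
      apply (uchain_le lt z Hz (S (g m)) (g n)); [apply gm in h; lia | exact H].
    - apply (uchain_le lt z Hz (S (g n)) (S (g m))); [apply gle in H; lia| apply y1]. }
  assert (NXX : forall m m', ~ lt (XX m) (XX m')).
  { intros m m' H. unfold XX in H. destruct (Nat.eq_dec m m') as [e|e].
    - subst. exact (irr _ H).
    - apply (za (S (g m)) (S (g m'))); [intro E; apply e, ginj; lia | exact H]. }
  assert (NYY : forall n n', ~ lt (YY n) (YY n')).
  { intros n n' H. unfold YY in H. destruct (Nat.eq_dec n n') as [e|e].
    - subst; exact (irr _ H).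
    - exact (ga n n' e H). }
  assert (NYX : forall n m, ~ lt (YY n) (XX m)).
  { intros n m H. unfold XX, YY in H.
    assert (H' : lt (z (S (g n))) (z (S (g m)))) by (eapply tr; [apply y1| exact H]).
    destruct (Nat.eq_dec (S (g n)) (S (g m))) as [e|e].
    - rewrite e in H'. exact (irr _ H').
    - exact (za _ _ e H'). }
  clearbody XX YY.
  exists (fun p : bool*nat => if fst p then YY (snd p) else XX (snd p)).
  apply emb_of_iff; [| exact Som_red].
  intros [[|] m] [[|] n]; unfold Somega2_lt; simpl; split; intro H;
  first [ (destruct H as [h1 [h2 h3]]; first [discriminate | apply XY; exact h3])
        | (exfalso; eapply NYY; exact H) | (exfalso; eapply NYX; exact H)
        | (exfalso; eapply NXX; exact H)
        | (split; [reflexivity|split;[reflexivity| apply XY; exact H]]) ].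
Qed.

Lemma CU_eq {X} (lt : X->X->Prop) (A B : CU lt) :
  (forall z, proj1_sig A z <-> proj1_sig B z) -> A = B.
Proof.
  destruct A as [a Ha], B as [b Hb]. simpl. intro H.
  assert (a = b) by (apply functional_extensionality; intro z; apply propositional_extensionality; apply H).
  subst b. f_equal. apply proof_irrelevance.
Qed.

Definition rep {X} {lt : X->X->Prop} (A : CU lt) : X :=
  proj1_sig (constructive_indefinite_description _ (proj2_sig A)).

Lemma rep_spec {X} (lt : X->X->Prop) (A : CU lt) : proj1_sig A = cu lt (rep A).
Proof. unfold rep. destruct (constructive_indefinite_description _ _) as [x Hx]. exact Hx. Qed.

Definition cuE {X} (lt : X->X->Prop) (x : X) : CU lt := exist _ (cu lt x) (ex_intro _ x eq_refl).

Lemma not_acc_seq {T} (r : T->T->Prop) (a : T) : ~ Acc r a ->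
  exists s : nat -> T, s 0 = a /\ forall n, r (s (S n)) (s n).
Proof.
  intro Ha.
  assert (step : forall x : {x | ~ Acc r x}, {y : {y | ~ Acc r y} | r (proj1_sig y) (proj1_sig x)}).
  { intros [x Hx]. apply constructive_indefinite_description.
    apply NNPP; intro Hn. apply Hx. constructor. intros y Hy. apply NNPP; intro Hy'.
    apply Hn. exists (exist _ y Hy'). exact Hy. }
  exists (fun n => proj1_sig (Nat.iter n (fun x => proj1_sig (step x)) (exist _ a Ha))).
  split; [reflexivity|].
  intro n. simpl. exact (proj2_sig (step _)).
Qed.

Lemma CU_wo {X} (lt : X->X->Prop) : strict_order lt -> well_founded lt -> tame lt ->
  well_order (CU_lt lt).
Proof.
  intros so wf tm. pose proof so as [irr tr].
  split; [|split; [|split]].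
  - intros A [H1 H2]. apply H2. auto.
  - intros A B C [h1 h2] [h3 h4]. split; [auto|]. intro H. apply h4. intros z hz. apply h1, H, hz.
  - intros A B.
    assert (key : forall A B : CU lt, (forall z, proj1_sig B z -> proj1_sig A z) ->
               CU_lt lt A B \/ A = B \/ CU_lt lt B A).
    { intros A0 B0 Hs. destruct (classic (forall z, proj1_sig A0 z -> proj1_sig B0 z)) as [h|h].
      - right; left. apply CU_eq. intro z; split; auto.
      - right; right. split; auto. }
    destruct (u_linear lt so tm (rep A) (rep B)) as [h|h].
    + apply key. intros z. rewrite (rep_spec lt A), (rep_spec lt B). unfold cu.
      intros H1 H2. apply H1, h, H2.
    + destruct (key B A) as [k|[k|k]].
      * intros z. rewrite (rep_spec lt A), (rep_spec lt B). unfold cu.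
        intros H1 H2. apply H1, h, H2.
      * auto.
      * auto.
      * auto.
  - intro A. apply NNPP; intro HA. destruct (not_acc_seq (CU_lt lt) A HA) as [s [_ Hs]].
    apply (proj2 tm). apply (uchain_Som lt so wf (fun n => rep (s n))). split; intro n.
    + intros z h. apply NNPP; intro h'. destruct (Hs n) as [sub _].
      assert (H : cu lt (rep (s (S n))) z) by exact h'.
      rewrite <- rep_spec in H. apply sub in H. rewrite rep_spec in H. exact (H h).
    + destruct (Hs n) as [_ ns]. apply not_all_ex_not in ns. destruct ns as [z hz].
      apply imply_to_and in hz. destruct hz as [h1 h2]. exists z.
      rewrite (rep_spec lt (s n)) in h1. rewrite (rep_spec lt (s (S n))) in h2. unfold cu in *.
      split; [apply NNPP; exact h2| exact h1].
Qed.

Lemma CU_embed {X} (lt : X->X->Prop) : strict_order lt -> well_founded lt -> reduced lt -> tame lt ->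
  embeds lt (Rl_lt (CU_lt lt)).
Proof.
  intros so wf red tm. pose proof so as [irr tr]. pose proof (CU_wo lt so wf tm) as wo.
  pose proof wo as [cir [ctr [ctri cwf]]].
  assert (Hal : forall y, {C : CU lt | proj1_sig C y /\ forall D : CU lt, proj1_sig D y -> ~ CU_lt lt D C}).
  { intro y. apply wo_least; [exact wo|]. exists (cuE lt y). simpl. unfold cu. apply irr. }
  pose (al := fun y => proj1_sig (Hal y)).
  assert (al1 : forall y, proj1_sig (al y) y) by (intro y; exact (proj1 (proj2_sig (Hal y)))).
  assert (al2 : forall y D, proj1_sig D y -> ~ CU_lt lt D (al y))
    by (intro y; exact (proj2 (proj2_sig (Hal y)))).
  clearbody al.
  assert (key : forall x y, lt x y <-> CU_lt lt (cuE lt x) (al y)).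
  { intros x y. split; intro H.
    - destruct (ctri (cuE lt x) (al y)) as [h|[h|h]]; auto; exfalso.
      + pose proof (al1 y) as a. rewrite <- h in a. simpl in a. exact (a H).
      + destruct h as [h _]. apply (h y (al1 y)). exact H.
    - apply NNPP; intro Hn. apply (al2 y (cuE lt x) Hn H). }
  assert (Hp : forall y, ~ CU_lt lt (snd (al y, cuE lt y)) (fst (al y, cuE lt y))).
  { intro y. simpl. apply al2. simpl. unfold cu. apply irr. }
  exists (fun y => exist (fun p : CU lt * CU lt => ~ CU_lt lt (snd p) (fst p)) (al y, cuE lt y) (Hp y)).
  split.
  - intros x y E. apply (f_equal (@proj1_sig _ _)) in E. simpl in E.
    assert (E1 := f_equal fst E). assert (E2 := f_equal snd E). simpl in E1, E2.
    apply red; intro z.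
    + rewrite !key, E1. tauto.
    + rewrite !key, E2. tauto.
  - intros x y. unfold Rl_lt. simpl. apply key.
Qed.

Lemma CU_min {X} (lt : X->X->Prop) : strict_order lt -> well_founded lt -> tame lt ->
  forall W (ltW : W->W->Prop), well_order ltW -> embeds lt (Rl_lt ltW) -> ord_le (CU_lt lt) ltW.
Proof.
  intros so wf tm W ltW wo [e [_ He]].
  apply (wo_embed_ord_le _ _ (CU_wo lt so wf tm) wo (fun A => snd (proj1_sig (e (rep A))))).
  intros A B [h1 h2]. rewrite (rep_spec lt A), (rep_spec lt B) in h2.
  apply not_all_ex_not in h2. destruct h2 as [z hz]. apply imply_to_and in hz.
  destruct hz as [n1 n2]. unfold cu in n1, n2. apply NNPP in n2.
  assert (a1 : Rl_lt ltW (e (rep A)) (e z)) by (apply He; exact n2).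
  assert (a2 : ~ Rl_lt ltW (e (rep B)) (e z)) by (intro H; apply He in H; exact (n1 H)).
  unfold Rl_lt in *. exact (wo_lt_le ltW wo _ _ _ a1 a2).
Qed.

Theorem proposition2p10 (S : Type) (lt : S -> S -> Prop) :
  strict_order lt -> well_founded lt -> reduced lt ->
  (tame lt <->
     exists (W : Type) (ltW : W -> W -> Prop), well_order ltW /\ embeds lt (Rl_lt ltW)) /\
  (tame lt ->
     well_order (CU_lt lt) /\
     embeds lt (Rl_lt (CU_lt lt)) /\
     (forall (W : Type) (ltW : W -> W -> Prop),
        well_order ltW -> embeds lt (Rl_lt ltW) -> ord_le (CU_lt lt) ltW) /\
     (exists g : CU lt -> S, forall A B, g A = g B -> A = B)).
Proof.
  intros so wf red.
  assert (P2 : tame lt ->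
     well_order (CU_lt lt) /\
     embeds lt (Rl_lt (CU_lt lt)) /\
     (forall (W : Type) (ltW : W -> W -> Prop),
        well_order ltW -> embeds lt (Rl_lt ltW) -> ord_le (CU_lt lt) ltW) /\
     (exists g : CU lt -> S, forall A B, g A = g B -> A = B)).
  { intro tm. split; [exact (CU_wo lt so wf tm)|]. split; [exact (CU_embed lt so wf red tm)|].
    split; [exact (CU_min lt so wf tm)|].
    exists rep. intros A B H. apply CU_eq. intro z.
    rewrite (rep_spec lt A), (rep_spec lt B), H. tauto. }
  split; [split|exact P2].
  - intro tm. destruct (P2 tm) as [wo [em _]]. exists (CU lt), (CU_lt lt). auto.
  - intros [W [ltW [wo em]]]. exact (Rl_tame lt ltW wo em).
Qed.
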